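(* Let $\nu>-1$ be real and let $0<a<b$ be two consecutive positive zeros of $J_\nu(\cdot;q^2)$. Then each of the functions $J_{\nu-1}(\cdot;q^2)$ and $J_{\nu+1}(\cdot;q^2)$ has at least one zero in the open interval $(a,b)$.
   Context: Fix $0<q<1$. For $a\in\mathbb C$ put $(a;q)_0=1$, $(a;q)_k=\prod_{i=0}^{k-1}(1-aq^i)$, $(a;q)_\infty=\prod_{i\ge0}(1-aq^i)$. For $\nu\in\mathbb C$ and $x\in\mathbb C\setminus\{0\}$ the Hahn–Exton $q$-Bessel function is $$J_\nu(x;q^2)=\frac{x^\nu}{(q^2;q^2)_\infty}\sum_{k=0}^\infty\frac{(-1)^kq^{k(k+1)}(q^{2\nu+2k+2};q^2)_\infty}{(q^2;q^2)_k}\,x^{2k},$$ with $x^\nu=\exp(\nu\operatorname{Log}x)$ (principal branch). *)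

(* Defs.v *)
From Stdlib Require Import Reals.
From Coquelicot Require Import Coquelicot.
Open Scope R_scope.

Fixpoint qpoch (a p : R) (k : nat) : R :=
  match k with
  | O => 1
  | S k' => qpoch a p k' * (1 - a * p ^ k')
  end.

Definition qpoch_inf (a p : R) : R := real (Lim_seq (fun k => qpoch a p k)).

(* Hahn–Exton q-Bessel function J_nu(x;q^2) for real nu and real x > 0
   (where x^nu = exp(nu ln x) is the principal branch, i.e. Rpower). *)
Definition HEJ (q nu x : R) : R :=
  Rpower x nu / qpoch_inf (q ^ 2) (q ^ 2) *
  Series (fun k : nat =>
    (-1) ^ k * q ^ (k * (k + 1)) * qpoch_inf (Rpower q (2 * nu + 2 * INR k + 2)) (q ^ 2)
    / qpoch (q ^ 2) (q ^ 2) k * x ^ (2 * k)).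

(* Main.v *)
Require Import Defs.
From Stdlib Require Import Reals.
From Coquelicot Require Import Coquelicot.
Open Scope R_scope.
From Stdlib Require Import Lra Lia Psatz.


Lemma qpoch_shift (a p : R) (k : nat) :
  qpoch a p (S k) = (1 - a) * qpoch (a * p) p k.
Proof.
  induction k as [|k IH]; simpl in *.
  - ring.
  - rewrite IH. ring.
Qed.

Lemma real_Rbar_mult (r : R) (l : Rbar) : real (Rbar_mult r l) = r * real l.
Proof.
  destruct l as [x| |]; simpl; try reflexivity;
  unfold Rbar_mult'; destruct (Rle_dec 0 r) as [H|H];
  try destruct (Rle_lt_or_eq_dec 0 r H); simpl; ring.
Qed.

Lemma qpoch_inf_shift (a p : R) :
  qpoch_inf a p = (1 - a) * qpoch_inf (a * p) p.
Proof.
  unfold qpoch_inf.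
  rewrite <- Lim_seq_incr_1.
  rewrite (Lim_seq_ext _ (fun k => (1 - a) * qpoch (a * p) p k)).
  2: { intro n. apply qpoch_shift. }
  rewrite Lim_seq_scal_l. apply real_Rbar_mult.
Qed.

Lemma pow_le1 (p : R) (n : nat) : 0 <= p <= 1 -> 0 <= p ^ n <= 1.
Proof.
  intros Hp. induction n; simpl. lra. nra.
Qed.

Fixpoint sumN (f : nat -> R) (N : nat) : R :=
  match N with O => 0 | S n => sumN f n + f n end.

Lemma geom_sum_le (p : R) (n : nat) : 0 <= p < 1 ->
  sumN (fun i => p ^ i) n <= / (1 - p).
Proof.
  intros Hp.
  assert (H : forall n, sumN (fun i => p ^ i) n * (1 - p) = 1 - p ^ n).
  { induction n0; simpl. ring. rewrite Rmult_plus_distr_r, IHn0. ring. }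
  specialize (H n).
  assert (0 <= p ^ n) by (apply pow_le; lra).
  apply (Rmult_le_reg_r (1 - p)). lra.
  rewrite H, Rinv_l by lra. lra.
Qed.

Lemma qpoch_01 (b p : R) (m : nat) : 0 <= b <= 1 -> 0 <= p <= 1 ->
  0 <= qpoch b p m <= 1.
Proof.
  intros Hb Hp. induction m as [|m IH]; simpl. lra.
  assert (H1 := pow_le1 p m Hp).
  assert (0 <= b * p ^ m <= 1) by nra.
  set (t := b * p ^ m) in *. nra.
Qed.

Lemma sumN_nonneg (f : nat -> R) (N : nat) : (forall k, 0 <= f k) -> 0 <= sumN f N.
Proof. intros H. induction N; simpl. lra. specialize (H N). lra. Qed.

Lemma qpoch_lower (b p : R) (m : nat) : 0 <= b <= 1 -> 0 <= p <= 1 ->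
  1 - b * sumN (fun i => p ^ i) m <= qpoch b p m.
Proof.
  intros Hb Hp. induction m as [|m IH]; simpl. lra.
  assert (H1 := pow_le1 p m Hp).
  assert (H4 := qpoch_01 b p m Hb Hp).
  assert (0 <= b * p ^ m <= 1) by nra.
  replace (b * (sumN (fun i => p ^ i) m + p ^ m)) with
    (b * sumN (fun i => p ^ i) m + b * p ^ m) by ring.
  set (t := b * p ^ m) in *. nra.
Qed.

Lemma qpoch_split (a p : R) (N m : nat) :
  qpoch a p (N + m) = qpoch a p N * qpoch (a * p ^ N) p m.
Proof.
  induction m as [|m IH].
  - rewrite Nat.add_0_r. simpl. ring.
  - rewrite <- plus_n_Sm. simpl. rewrite IH, pow_add. ring.
Qed.

Lemma qpoch_decr (a p : R) (k : nat) : 0 <= a <= 1 -> 0 <= p <= 1 ->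
  qpoch a p (S k) <= qpoch a p k.
Proof.
  intros Ha Hp. simpl. assert (H1 := pow_le1 p k Hp).
  assert (H4 := qpoch_01 a p k Ha Hp).
  assert (0 <= a * p ^ k <= 1) by nra.
  set (t := a * p ^ k) in *. nra.
Qed.

Lemma qpoch_decr_le (a p : R) (k n : nat) : 0 <= a <= 1 -> 0 <= p <= 1 ->
  (k <= n)%nat -> qpoch a p n <= qpoch a p k.
Proof.
  intros Ha Hp Hkn. induction Hkn. lra.
  assert (H := qpoch_decr a p m Ha Hp). lra.
Qed.

Lemma qpoch_pos (a p : R) (k : nat) : 0 <= a < 1 -> 0 <= p <= 1 ->
  0 < qpoch a p k.
Proof.
  intros Ha Hp. induction k; simpl. lra.
  assert (H1 := pow_le1 p k Hp).
  assert (a * p ^ k < 1) by nra. nra.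
Qed.

Lemma qpoch_bounds (a p : R) : 0 <= a < 1 -> 0 < p < 1 ->
  exists m, 0 < m /\ (forall k, m <= qpoch a p k <= 1) /\
            m <= qpoch_inf a p <= 1.
Proof.
  intros Ha Hp.
  assert (Hp' : 0 <= p <= 1) by lra.
  assert (Ha' : 0 <= a <= 1) by lra.
  destruct (pow_lt_1_zero p ltac:(rewrite Rabs_pos_eq; lra) ((1 - p) / 2)
     ltac:(apply Rdiv_lt_0_compat; lra)) as [N HN].
  specialize (HN N (Nat.le_refl N)). rewrite Rabs_pos_eq in HN by (apply pow_le; lra).
  set (m := qpoch a p N / 2).
  assert (HqN : 0 < qpoch a p N) by (apply qpoch_pos; lra).
  assert (Hall : forall k, m <= qpoch a p k <= 1).
  { intro k. split; [| apply qpoch_01; lra].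
    destruct (Nat.le_gt_cases N k) as [Hk|Hk].
    - replace k with (N + (k - N))%nat by lia.
      rewrite qpoch_split.
      assert (Hpn := pow_le1 p N Hp').
      assert (Hb : 0 <= a * p ^ N <= 1) by nra.
      assert (Hl := qpoch_lower (a * p ^ N) p (k - N) Hb Hp').
      assert (Hg := geom_sum_le p (k - N) ltac:(lra)).
      assert (Hs0 := sumN_nonneg (fun i => p ^ i) (k - N) (fun i => pow_le p i ltac:(lra))).
      assert (Hinv : (1 - p) * / (1 - p) = 1) by (field; lra).
      assert (Hx : a * p ^ N * sumN (fun i : nat => p ^ i) (k - N) <= 1 / 2).
      { apply Rle_trans with (p ^ N * / (1 - p)).
        - assert (0 <= p ^ N) by lra.
          set (S := sumN (fun i : nat => p ^ i) (k - N)) in *.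
          apply Rle_trans with (p ^ N * S).
          + apply Rmult_le_compat_r; [lra|]. nra.
          + apply Rmult_le_compat_l; lra.
        - apply (Rmult_le_reg_r (1 - p)). lra.
          rewrite Rmult_assoc, Rinv_l by lra. lra. }
      assert (qpoch (a * p ^ N) p (k - N) >= 1/2) by lra.
      unfold m. apply Rle_trans with (qpoch a p N * (1/2)). lra.
      apply Rmult_le_compat_l; lra.
    - assert (qpoch a p N <= qpoch a p k) by (apply qpoch_decr_le; [lra|lra|lia]).
      unfold m. lra. }
  exists m. split. unfold m; lra. split. exact Hall.
  assert (Hex : ex_lim_seq (qpoch a p)).
  { apply ex_lim_seq_decr. intro n. apply qpoch_decr; lra. }
  assert (Hc := Lim_seq_correct _ Hex).
  assert (H1 := is_lim_seq_le (fun _ => m) (qpoch a p) m (Lim_seq (qpoch a p))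
     (fun k => proj1 (Hall k)) (is_lim_seq_const m) Hc).
  assert (H2 := is_lim_seq_le (qpoch a p) (fun _ => 1) (Lim_seq (qpoch a p)) 1
     (fun k => proj2 (Hall k)) Hc (is_lim_seq_const 1)).
  unfold qpoch_inf.
  destruct (Lim_seq (qpoch a p)) as [l| |]; simpl in *; try contradiction.
  lra.
Qed.


Definition coef (q nu : R) (k : nat) : R :=
  (-1) ^ k * q ^ (k * (k + 1)) * qpoch_inf (Rpower q (2 * nu + 2 * INR k + 2)) (q ^ 2)
    / qpoch (q ^ 2) (q ^ 2) k.

Lemma Rpower_2k (q s : R) (k : nat) : 0 < q ->
  Rpower q (s + 2 * INR k) = Rpower q s * (q ^ 2) ^ k.
Proof.
  intros Hq. rewrite Rpower_plus. f_equal.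
  rewrite <- pow_mult. rewrite <- Rpower_pow by lra. f_equal.
  rewrite mult_INR. simpl. ring.
Qed.

Lemma Rpower_add2 (q s : R) : 0 < q -> Rpower q (s + 2) = Rpower q s * q ^ 2.
Proof.
  intros Hq. rewrite Rpower_plus. f_equal.
  rewrite <- Rpower_pow by lra. f_equal; try (simpl; ring).
Qed.

Lemma coef_m1 (q nu : R) (k : nat) : 0 < q ->
  coef q (nu - 1) k = (1 - Rpower q (2 * nu) * (q ^ 2) ^ k) * coef q nu k.
Proof.
  intros Hq. unfold coef.
  replace (2 * (nu - 1) + 2 * INR k + 2) with (2 * nu + 2 * INR k) by ring.
  rewrite Rpower_2k by lra.
  rewrite (qpoch_inf_shift (Rpower q (2 * nu) * (q ^ 2) ^ k)).
  replace (Rpower q (2 * nu) * (q ^ 2) ^ k * q ^ 2) with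
    (Rpower q (2 * nu + 2 * INR k + 2)).
  2: { rewrite Rpower_add2, Rpower_2k by lra. reflexivity. }
  unfold Rdiv. ring.
Qed.

Lemma coef_p1 (q nu : R) (k : nat) : 0 < q < 1 ->
  coef q (nu + 1) k * (q ^ 2) ^ (S k) = - (1 - (q ^ 2) ^ (S k)) * coef q nu (S k).
Proof.
  intros Hq. unfold coef.
  assert (Hp : 0 <= q ^ 2 <= 1) by nra.
  assert (HQ : 0 < qpoch (q^2) (q^2) k).
  { apply qpoch_pos; nra. }
  assert (Hpk : (q ^ 2) ^ (S k) < 1).
  { change ((q ^ 2) ^ S k) with (q ^ 2 * (q ^ 2) ^ k).
    assert (H := pow_le1 (q^2) k Hp).
    assert (q ^ 2 < 1) by (simpl; nra). nra. }
  replace (2 * nu + 2 * INR (S k) + 2) with (2 * (nu + 1) + 2 * INR k + 2)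
    by (rewrite S_INR; ring).
  replace (S k * (S k + 1))%nat with (k * (k + 1) + 2 * (S k))%nat by lia.
  rewrite pow_add, pow_mult.
  change (qpoch (q ^ 2) (q ^ 2) (S k)) with
    (qpoch (q ^ 2) (q ^ 2) k * (1 - q ^ 2 * (q ^ 2) ^ k)).
  change ((q ^ 2) ^ S k) with (q ^ 2 * (q ^ 2) ^ k) in *.
  simpl ((-1) ^ S k).
  replace (q ^ (2 * S k)) with (q ^ 2 * (q ^ 2) ^ k) by (rewrite pow_mult; reflexivity).
  field. split; lra.
Qed.

Lemma coef_rec (q nu : R) (k : nat) : 0 < q < 1 ->
  coef q nu (S k) * (1 - (q ^ 2) ^ (S k)) * (1 - Rpower q (2 * nu) * (q ^ 2) ^ (S k))
  = - (q ^ 2) ^ (S k) * coef q nu k.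
Proof.
  intros Hq.
  assert (H1 := coef_m1 q (nu + 1) k ltac:(lra)).
  replace (nu + 1 - 1) with nu in H1 by ring.
  replace (2 * (nu + 1)) with (2 * nu + 2) in H1 by ring.
  rewrite Rpower_add2 in H1 by lra.
  assert (H2 := coef_p1 q nu k Hq).
  rewrite H1.
  change ((q ^ 2) ^ S k) with (q ^ 2 * (q ^ 2) ^ k) in *.
  replace (coef q nu (S k) * (1 - q ^ 2 * (q ^ 2) ^ k)) with
    (- (coef q (nu + 1) k * (q ^ 2 * (q ^ 2) ^ k))) by (rewrite H2; ring).
  ring.
Qed.


Lemma Rpower_in01 (q s : R) : 0 < q < 1 -> 0 < s -> 0 < Rpower q s < 1.
Proof.
  intros Hq Hs. unfold Rpower. split. apply exp_pos.
  rewrite <- exp_0. apply exp_increasing.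
  assert (ln q < 0) by (rewrite <- ln_1; apply ln_increasing; lra).
  nra.
Qed.

Lemma coef_bound (q nu : R) : 0 < q < 1 -> -1 < nu ->
  exists m, 0 < m /\ forall k, Rabs (coef q nu k) <= q ^ (k * (k + 1)) / m.
Proof.
  intros Hq Hnu.
  assert (Hp : 0 < q ^ 2 < 1) by (simpl; nra).
  destruct (qpoch_bounds (q^2) (q^2) ltac:(lra) Hp) as [m [Hm [Hk _]]].
  exists m. split; [exact Hm|]. intro k.
  assert (HA : 0 < Rpower q (2 * nu + 2 * INR k + 2) < 1).
  { apply Rpower_in01; auto. assert (0 <= INR k) by apply pos_INR. lra. }
  destruct (qpoch_bounds (Rpower q (2 * nu + 2 * INR k + 2)) (q^2) ltac:(lra) Hp) as [m' [Hm' [_ HI]]].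
  unfold coef.
  set (I := qpoch_inf (Rpower q (2 * nu + 2 * INR k + 2)) (q ^ 2)) in *.
  set (Q := qpoch (q ^ 2) (q ^ 2) k).
  assert (HQ : m <= Q <= 1) by apply Hk.
  assert (Hqk : 0 <= q ^ (k * (k + 1))) by (apply pow_le; lra).
  unfold Rdiv. rewrite !Rabs_mult, Rabs_inv, pow_1_abs, (Rabs_pos_eq (q ^ _)) by lra.
  rewrite (Rabs_pos_eq I) by lra. rewrite (Rabs_pos_eq Q) by lra.
  assert (0 < / Q <= / m).
  { split. apply Rinv_0_lt_compat; lra. apply Rinv_le_contravar; lra. }
  assert (0 < / m) by (apply Rinv_0_lt_compat; lra).
  rewrite Rmult_1_l.
  apply Rmult_le_compat. nra. lra. nra. lra.
Qed.

Lemma pow_decr (q : R) (n m : nat) : 0 <= q <= 1 -> (n <= m)%nat -> q ^ m <= q ^ n.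
Proof.
  intros Hq Hnm. replace m with (n + (m - n))%nat by lia. rewrite pow_add.
  assert (H1 := pow_le1 q (m - n) Hq). assert (0 <= q ^ n) by (apply pow_le; lra).
  nra.
Qed.

Lemma ex_series_dom (q Z : R) : 0 < q < 1 -> 0 <= Z ->
  ex_series (fun k => q ^ (k * (k + 1)) * Z ^ k).
Proof.
  intros Hq HZ.
  destruct (pow_lt_1_zero q ltac:(rewrite Rabs_pos_eq; lra) (/ (2 * (Z + 1)))
     ltac:(apply Rinv_0_lt_compat; lra)) as [N HN].
  specialize (HN N (Nat.le_refl N)). rewrite Rabs_pos_eq in HN by (apply pow_le; lra).
  assert (HNZ : q ^ N * Z <= / 2).
  { assert (q ^ N * (2 * (Z + 1)) < 1).
    { apply (Rmult_lt_reg_r (/ (2 * (Z + 1)))). apply Rinv_0_lt_compat; lra.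
      rewrite Rmult_assoc, Rinv_r, Rmult_1_r, Rmult_1_l by lra. lra. }
    assert (0 <= q ^ N) by (apply pow_le; lra). nra. }
  apply (proj2 (ex_series_incr_n _ N)).
  apply (@ex_series_le R_AbsRing R_CompleteNormedModule _ (fun k => (/ 2) ^ k)).
  2: { apply ex_series_geom. rewrite Rabs_pos_eq; lra. }
  intro k. change (norm ?x) with (Rabs x).
  set (j := (N + k)%nat).
  rewrite Nat.mul_comm, pow_mult, <- Rpow_mult_distr.
  assert (Hj : 0 <= q ^ (j + 1) * Z <= / 2).
  { split. apply Rmult_le_pos; [apply pow_le; lra| lra].
    apply Rle_trans with (q ^ N * Z); [|lra].
    apply Rmult_le_compat_r; [lra|].
    apply pow_decr; [lra | unfold j; lia]. }
  apply Rle_trans with ((/ 2) ^ j).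
  - rewrite Rabs_pos_eq by (apply pow_le; lra). apply pow_incr. lra.
  - unfold j. rewrite pow_add.
    assert (H1 := pow_le1 (/2) N ltac:(lra)). assert (H2 := pow_le (/2) k ltac:(lra)).
    nra.
Qed.


Definition G (q nu z : R) : R := Series (fun k => coef q nu k * z ^ k).

Lemma series_abs_le (a b : nat -> R) : (forall k, Rabs (a k) <= b k) -> ex_series b ->
  Rabs (Series a) <= Series b.
Proof.
  intros H Hb.
  assert (Ha : ex_series (fun n => Rabs (a n))).
  { apply (@ex_series_le R_AbsRing R_CompleteNormedModule _ b); auto.
    intro n. change (norm ?x) with (Rabs x). rewrite Rabs_Rabsolu. auto. }
  eapply Rle_trans. apply Series_Rabs; auto.
  apply Series_le; auto. intro n. split. apply Rabs_pos. auto.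
Qed.

Lemma pow_diff_le (z w B : R) (k : nat) : Rabs z <= B -> Rabs w <= B ->
  Rabs (z ^ k - w ^ k) <= (2 * B + 2) ^ k * Rabs (z - w).
Proof.
  intros Hz Hw. assert (HB : 0 <= B) by (pose proof (Rabs_pos z); lra).
  induction k as [|k IH].
  - simpl. rewrite Rminus_diag, Rabs_R0. pose proof (Rabs_pos (z - w)). lra.
  - replace (z ^ S k - w ^ S k) with (z * (z ^ k - w ^ k) + w ^ k * (z - w)) by (simpl; ring).
    eapply Rle_trans. apply Rabs_triang. rewrite !Rabs_mult.
    assert (Hwk : Rabs (w ^ k) <= (2 * B + 2) ^ k).
    { rewrite <- RPow_abs. apply pow_incr. split. apply Rabs_pos. lra. }
    assert (H0 := Rabs_pos (z - w)). assert (H1 := Rabs_pos (z ^ k - w ^ k)).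
    assert (H2 := Rabs_pos (w ^ k)). assert (H3 : 0 <= (2 * B + 2) ^ k) by (apply pow_le; lra).
    simpl.
    assert (Rabs z * Rabs (z ^ k - w ^ k) <= B * ((2 * B + 2) ^ k * Rabs (z - w))).
    { apply Rmult_le_compat; try lra. apply Rabs_pos. }
    assert (Rabs (w ^ k) * Rabs (z - w) <= (2 * B + 2) ^ k * Rabs (z - w)).
    { apply Rmult_le_compat_r; lra. }
    nra.
Qed.

Section GS.
Variables q nu m : R.
Hypothesis Hq : 0 < q < 1.
Hypothesis Hm : 0 < m.
Hypothesis Hcb : forall k, Rabs (coef q nu k) <= q ^ (k * (k + 1)) / m.

Definition dom (Z : R) := Series (fun k => q ^ (k * (k + 1)) * Z ^ k).

Lemma dom_term (z B : R) (k : nat) : Rabs z <= B ->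
  Rabs (coef q nu k * z ^ k) <= / m * (q ^ (k * (k + 1)) * B ^ k).
Proof.
  intros Hz. rewrite Rabs_mult, <- RPow_abs.
  assert (Hb := Hcb k). assert (0 <= Rabs z ^ k) by (apply pow_le, Rabs_pos).
  assert (Rabs z ^ k <= B ^ k) by (apply pow_incr; split; [apply Rabs_pos|lra]).
  assert (0 <= q ^ (k * (k + 1))) by (apply pow_le; lra).
  assert (0 < / m) by (apply Rinv_0_lt_compat; lra).
  unfold Rdiv in Hb.
  apply Rle_trans with (q ^ (k * (k + 1)) * / m * Rabs z ^ k).
  apply Rmult_le_compat_r; auto.
  rewrite (Rmult_comm (q ^ _)), Rmult_assoc. apply Rmult_le_compat_l. lra.
  apply Rmult_le_compat_l; lra.
Qed.

Lemma ex_dom_scaled (B : R) : 0 <= B ->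
  ex_series (fun k => / m * (q ^ (k * (k + 1)) * B ^ k)).
Proof.
  intros HB. apply (@ex_series_scal_l R_AbsRing R_CompleteNormedModule).
  apply ex_series_dom; auto.
Qed.

Lemma G_ex (z : R) : ex_series (fun k => coef q nu k * z ^ k).
Proof.
  apply (@ex_series_le R_AbsRing R_CompleteNormedModule _ _ (fun k => dom_term z (Rabs z) k (Rle_refl _))).
  apply ex_dom_scaled, Rabs_pos.
Qed.

Lemma G_bound (z B : R) : Rabs z <= B -> Rabs (G q nu z) <= / m * dom B.
Proof.
  intros Hz. assert (HB : 0 <= B) by (pose proof (Rabs_pos z); lra).
  unfold G, dom. rewrite <- Series_scal_l.
  apply series_abs_le. intro k. apply dom_term; auto. apply ex_dom_scaled; auto.
Qed.

Lemma G_lip (z w B : R) : Rabs z <= B -> Rabs w <= B ->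
  Rabs (G q nu z - G q nu w) <= / m * dom (2 * B + 2) * Rabs (z - w).
Proof.
  intros Hz Hw. assert (HB : 0 <= B) by (pose proof (Rabs_pos z); lra).
  unfold G, dom. rewrite <- Series_minus by apply G_ex.
  rewrite <- Series_scal_l, <- Series_scal_r.
  apply series_abs_le.
  - intro k. replace (coef q nu k * z ^ k - coef q nu k * w ^ k) with
      (coef q nu k * (z ^ k - w ^ k)) by ring.
    rewrite Rabs_mult.
    assert (H1 := pow_diff_le z w B k Hz Hw).
    assert (Hb := Hcb k). unfold Rdiv in Hb.
    assert (0 <= q ^ (k * (k + 1))) by (apply pow_le; lra).
    assert (0 < / m) by (apply Rinv_0_lt_compat; lra).
    assert (0 <= (2 * B + 2) ^ k) by (apply pow_le; lra).
    assert (H4 := Rabs_pos (z ^ k - w ^ k)). assert (H5 := Rabs_pos (z - w)).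
    apply Rle_trans with (q ^ (k * (k + 1)) * / m * ((2 * B + 2) ^ k * Rabs (z - w))).
    apply Rmult_le_compat; auto. apply Rabs_pos.
    right. ring.
  - apply ex_series_scal_r.
    apply ex_dom_scaled. lra.
Qed.
End GS.


Section GI.
Variables q nu m : R.
Hypothesis Hq : 0 < q < 1.
Hypothesis Hm : 0 < m.
Hypothesis Hcb : forall k, Rabs (coef q nu k) <= q ^ (k * (k + 1)) / m.

Let Gx := G q nu.
Let Gex := G_ex q nu m Hq Hm Hcb.

Lemma G_cont (z : R) : continuity_pt Gx z.
Proof.
  unfold continuity_pt, continue_in, limit1_in, limit_in. simpl. unfold R_dist.
  intros eps Heps.
  set (B := Rabs z + 1).
  set (L := Rabs (/ m * dom q (2 * B + 2)) + 1).
  assert (HL : 0 < L) by (unfold L; pose proof (Rabs_pos (/ m * dom q (2 * B + 2))); lra).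
  exists (Rmin 1 (eps / L)). split.
  { apply Rmin_pos. lra. apply Rdiv_lt_0_compat; lra. }
  intros x [_ Hx].
  assert (Hx1 : Rabs (x - z) < 1) by (eapply Rlt_le_trans; [exact Hx| apply Rmin_l]).
  assert (Hx2 : Rabs (x - z) < eps / L) by (eapply Rlt_le_trans; [exact Hx| apply Rmin_r]).
  assert (HxB : Rabs x <= B).
  { unfold B. replace x with ((x - z) + z) by ring.
    eapply Rle_trans. apply Rabs_triang. lra. }
  assert (HzB : Rabs z <= B) by (unfold B; lra).
  assert (H := G_lip q nu m Hq Hm Hcb x z B HxB HzB).
  fold Gx in H.
  apply Rle_lt_trans with (L * Rabs (x - z)).
  - eapply Rle_trans. exact H. apply Rmult_le_compat_r. apply Rabs_pos.
    unfold L. pose proof (Rle_abs (/ m * dom q (2 * B + 2))). lra.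
  - apply (Rmult_lt_reg_r (/ L)). apply Rinv_0_lt_compat; lra.
    replace (L * Rabs (x - z) * / L) with (Rabs (x - z)) by (field; lra). exact Hx2.
Qed.

Let p := q ^ 2.
Let c := Rpower q (2 * nu).

Lemma G_rec (z : R) : Gx z = (1 + c - p * z) * Gx (p * z) - c * Gx (p * (p * z)).
Proof.
  set (h := fun k => coef q nu k * z ^ k - (1 + c) * (coef q nu k * (p * z) ^ k)
                     + c * (coef q nu k * (p * (p * z)) ^ k)).
  assert (Hh : Series h = Gx z - (1 + c) * Gx (p * z) + c * Gx (p * (p * z))).
  { unfold h, Gx, G.
    rewrite Series_plus.
    rewrite Series_minus by (try apply Gex; apply (@ex_series_scal_l R_AbsRing R_CompleteNormedModule); apply Gex).
    rewrite !Series_scal_l. reflexivity.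
    apply (@ex_series_minus R_AbsRing R_CompleteNormedModule). apply Gex.
    apply (@ex_series_scal_l R_AbsRing R_CompleteNormedModule); apply Gex.
    apply (@ex_series_scal_l R_AbsRing R_CompleteNormedModule); apply Gex. }
  assert (Hex : ex_series h).
  { unfold h. apply (@ex_series_plus R_AbsRing R_CompleteNormedModule).
    apply (@ex_series_minus R_AbsRing R_CompleteNormedModule). apply Gex.
    apply (@ex_series_scal_l R_AbsRing R_CompleteNormedModule); apply Gex.
    apply (@ex_series_scal_l R_AbsRing R_CompleteNormedModule); apply Gex. }
  rewrite Series_incr_1 in Hh by exact Hex.
  assert (H0 : h 0%nat = 0) by (unfold h; simpl; ring).
  rewrite H0, Rplus_0_l in Hh.
  assert (H1 : Series (fun k => h (S k)) = - (p * z) * Gx (p * z)).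
  { unfold Gx, G. rewrite <- Series_scal_l. apply Series_ext. intro k.
    unfold h. rewrite !Rpow_mult_distr.
    assert (HR := coef_rec q nu k Hq). fold p c in HR.
    transitivity (coef q nu (S k) * (1 - p ^ S k) * (1 - c * p ^ S k) * z ^ S k).
    { simpl. ring. }
    rewrite HR. simpl. ring. }
  rewrite H1 in Hh. lra.
Qed.
End GI.


Lemma HEJ_G (q nu x : R) :
  HEJ q nu x = Rpower x nu / qpoch_inf (q ^ 2) (q ^ 2) * G q nu (x ^ 2).
Proof.
  unfold HEJ, G. f_equal. apply Series_ext. intro k.
  rewrite <- pow_mult. reflexivity.
Qed.

Section HI.
Variables q nu m : R.
Hypothesis Hq : 0 < q < 1.
Hypothesis Hm : 0 < m.
Hypothesis Hcb : forall k, Rabs (coef q nu k) <= q ^ (k * (k + 1)) / m.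

Let Gx := G q nu.
Let Gex := G_ex q nu m Hq Hm Hcb.
Let p := q ^ 2.
Let c := Rpower q (2 * nu).

Lemma HEJ_m1 (x : R) :
  HEJ q (nu - 1) x = Rpower x (nu - 1) / qpoch_inf p p * (Gx (x ^ 2) - c * Gx (p * x ^ 2)).
Proof.
  rewrite HEJ_G. f_equal. unfold Gx, G.
  rewrite <- Series_scal_l, <- Series_minus.
  - apply Series_ext. intro k. rewrite coef_m1 by lra. fold c p.
    rewrite Rpow_mult_distr. ring.
  - apply Gex.
  - apply (@ex_series_scal_l R_AbsRing R_CompleteNormedModule); apply Gex.
Qed.

Lemma HEJ_p1 (x : R) : x <> 0 ->
  HEJ q (nu + 1) x * x ^ 2 =
  Rpower x (nu + 1) / qpoch_inf p p * (Gx (x ^ 2) - Gx (x ^ 2 / p)).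
Proof.
  intros Hx. rewrite HEJ_G. fold p. rewrite Rmult_assoc. f_equal.
  set (z := x ^ 2).
  assert (Hp : 0 < p) by (unfold p; simpl; nra).
  unfold Gx, G. rewrite <- Series_minus by apply Gex.
  rewrite (Series_incr_1 (fun k => coef q nu k * z ^ k - coef q nu k * (z / p) ^ k)).
  2: { apply (@ex_series_minus R_AbsRing R_CompleteNormedModule); apply Gex. }
  simpl pow at 3 4. rewrite Rminus_diag, Rplus_0_l.
  rewrite Rmult_comm, <- Series_scal_l. apply Series_ext. intro k.
  assert (H := coef_p1 q nu k Hq). fold p in H.
  assert (Hpk : 0 < p ^ S k) by (apply pow_lt; lra).
  replace ((z / p) ^ S k) with (z ^ S k / p ^ S k)
    by (unfold Rdiv; rewrite Rpow_mult_distr, pow_inv; reflexivity).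
  change (z * z ^ k) with (z ^ S k).
  apply (Rmult_eq_reg_r (p ^ S k)). 2: lra.
  transitivity (coef q (nu + 1) k * p ^ S k * z ^ S k).
  { change (z ^ S k) with (z * z ^ k). ring. }
  rewrite H. field. lra.
Qed.
End HI.


Lemma sumN_scal_r (f : nat -> R) (a : R) (N : nat) :
  sumN (fun k => f k * a) N = sumN f N * a.
Proof. induction N; simpl. ring. rewrite IHN. ring. Qed.

Lemma sumN_diff (f g h : nat -> R) (N : nat) :
  (forall k, Rabs (f k - g k) <= h k) -> Rabs (sumN f N - sumN g N) <= sumN h N.
Proof.
  intros H. induction N; simpl. rewrite Rminus_diag, Rabs_R0. lra.
  replace (sumN f N + f N - (sumN g N + g N)) with ((sumN f N - sumN g N) + (f N - g N)) by ring.
  eapply Rle_trans. apply Rabs_triang. specialize (H N). lra.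
Qed.

Lemma sumN_ge_term (f : nat -> R) (K N : nat) :
  (forall k, 0 <= f k) -> (K < N)%nat -> f K <= sumN f N.
Proof.
  intros H HK. induction HK; simpl.
  - pose proof (sumN_nonneg f K H). lra.
  - specialize (H m). lra.
Qed.

Section Tele.
Variable g : R -> R.
Variables p c : R.
Hypothesis Hrec : forall z, g z = (1 + c - p * z) * g (p * z) - c * g (p * (p * z)).

Definition DD (X Y : R) (n : nat) :=
  g (p ^ n * X) * g (p ^ S n * Y) - g (p ^ n * Y) * g (p ^ S n * X).

Definition TT (X Y : R) (N : nat) :=
  sumN (fun k => c ^ k * p ^ S k * (g (p ^ S k * X) * g (p ^ S k * Y))) N.

Lemma DD_step (X Y : R) (n : nat) :
  DD X Y n = c * DD X Y (S n) + (Y - X) * p ^ S n * (g (p ^ S n * X) * g (p ^ S n * Y)).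
Proof.
  unfold DD.
  rewrite (Hrec (p ^ n * X)), (Hrec (p ^ n * Y)).
  replace (p * (p ^ n * X)) with (p ^ S n * X) by (simpl; ring).
  replace (p * (p ^ n * Y)) with (p ^ S n * Y) by (simpl; ring).
  replace (p * (p ^ S n * X)) with (p ^ S (S n) * X) by (simpl; ring).
  replace (p * (p ^ S n * Y)) with (p ^ S (S n) * Y) by (simpl; ring).
  ring.
Qed.

Lemma tele (X Y : R) (N : nat) :
  DD X Y 0 = (Y - X) * TT X Y N + c ^ N * DD X Y N.
Proof.
  induction N as [|N IH].
  - unfold TT. simpl. ring.
  - rewrite IH, DD_step. unfold TT. simpl. ring.
Qed.
End Tele.


Lemma local_sign (g : R -> R) (p c L M B X0 : R) :
  0 < p < 1 -> 0 < c -> c * p < 1 -> 0 <= L ->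
  (forall z, g z = (1 + c - p * z) * g (p * z) - c * g (p * (p * z))) ->
  (forall z w, 0 <= z <= B -> 0 <= w <= B -> Rabs (g z - g w) <= L * Rabs (z - w)) ->
  (forall z, 0 <= z <= B -> Rabs (g z) <= M) ->
  0 < g 0 -> 0 < X0 -> X0 + 1 <= B -> g X0 = 0 ->
  exists delta, 0 < delta /\ forall Y, 0 <= Y -> Rabs (Y - X0) < delta -> Y <> X0 ->
    0 < (Y - X0) * (- (g Y * g (p * X0))).
Proof.
  intros Hp Hc Hcp HL Hrec Hlip Hbnd Hg0 HX0 HB HgX.
  assert (HM : 0 <= M) by (pose proof (Hbnd 0 ltac:(lra)); pose proof (Rabs_pos (g 0)); lra).
  set (d := g 0).
  assert (Hp01 : 0 <= p <= 1) by lra.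
  assert (Hpj : forall j, 0 <= p ^ j <= 1) by (intro j; apply pow_le1; lra).
  assert (Hin : forall j Z, 0 <= Z <= B -> 0 <= p ^ j * Z <= B).
  { intros j Z HZ. specialize (Hpj j). split. nra.
    apply Rle_trans with (1 * Z). apply Rmult_le_compat_r; lra. lra. }
  destruct (pow_lt_1_zero p ltac:(rewrite Rabs_pos_eq; lra) (d / (2 * (X0 * L + 1)))
     ltac:(apply Rdiv_lt_0_compat; [unfold d; lra| nra])) as [K0 HK0].
  set (K := K0).
  assert (HgK : d / 2 < g (p ^ S K * X0)).
  { assert (H1 := HK0 (S K) ltac:(unfold K; lia)).
    rewrite Rabs_pos_eq in H1 by (apply pow_le; lra).
    assert (H2 := Hlip (p ^ S K * X0) 0 (Hin (S K) X0 ltac:(lra)) ltac:(lra)).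
    rewrite Rminus_0_r in H2. rewrite (Rabs_pos_eq (p ^ S K * X0)) in H2
      by (pose proof (Hpj (S K)); nra).
    assert (H3 : L * (p ^ S K * X0) < d / 2).
    { assert (Hpos : 0 < 2 * (X0 * L + 1)) by nra.
      assert (p ^ S K * (2 * (X0 * L + 1)) < d).
      { apply (Rmult_lt_reg_r (/ (2 * (X0 * L + 1)))). apply Rinv_0_lt_compat; lra.
        rewrite Rmult_assoc, Rinv_r, Rmult_1_r by lra. exact H1. }
      pose proof (Hpj (S K)). nra. }
    pose proof (Rle_abs (g 0 - g (p ^ S K * X0))).
    rewrite Rabs_minus_sym in H2. unfold d in *. lra. }
  set (tau := c ^ K * p ^ S K * (d / 2) ^ 2).
  assert (Htau : 0 < tau).
  { unfold tau. apply Rmult_lt_0_compat. apply Rmult_lt_0_compat; apply pow_lt; lra.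
    apply pow_lt. unfold d; lra. }
  destruct (pow_lt_1_zero (c * p) ltac:(rewrite Rabs_pos_eq; nra) (tau / (8 * (M * L + 1)))
     ltac:(apply Rdiv_lt_0_compat; nra)) as [N1 HN1].
  set (N := Nat.max N1 (S K)).
  assert (HN : (c * p) ^ N < tau / (8 * (M * L + 1))).
  { specialize (HN1 N ltac:(unfold N; lia)). rewrite Rabs_pos_eq in HN1 by (apply pow_le; nra). exact HN1. }
  assert (HNerr : 2 * M * L * (c * p) ^ N <= tau / 4).
  { assert (0 <= (c * p) ^ N) by (apply pow_le; nra).
    assert (HH : (c * p) ^ N * (8 * (M * L + 1)) < tau).
    { apply (Rmult_lt_reg_r (/ (8 * (M * L + 1)))). apply Rinv_0_lt_compat; nra.
      rewrite Rmult_assoc, Rinv_r, Rmult_1_r by nra. exact HN. }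
    nra. }
  set (Kn := sumN (fun k => c ^ k * p ^ S k * (M * (L * p ^ S k))) N).
  assert (HKn : 0 <= Kn).
  { apply sumN_nonneg. intro k. pose proof (Hpj (S k)).
    assert (0 <= c ^ k) by (apply pow_le; lra).
    apply Rmult_le_pos; [nra|]. apply Rmult_le_pos; [lra|]. nra. }
  exists (Rmin 1 (tau / (4 * (Kn + 1)))). split.
  { apply Rmin_pos. lra. apply Rdiv_lt_0_compat; lra. }
  intros Y HY HYd HYne.
  assert (HY1 : Rabs (Y - X0) < 1) by (eapply Rlt_le_trans; [exact HYd| apply Rmin_l]).
  assert (HY2 : Rabs (Y - X0) < tau / (4 * (Kn + 1))) by (eapply Rlt_le_trans; [exact HYd| apply Rmin_r]).
  assert (HYB : 0 <= Y <= B) by (pose proof (Rle_abs (Y - X0)); lra).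
  assert (HXB : 0 <= X0 <= B) by lra.
  set (e := Rabs (Y - X0)).
  assert (He : 0 < e) by (unfold e; apply Rabs_pos_lt; lra).
  assert (Htel := tele g p c Hrec X0 Y N).
  unfold DD at 1 in Htel. rewrite !pow_O, !Rmult_1_l, pow_1, HgX, Rmult_0_l, Rminus_0_l in Htel.
  assert (HT0 : tau <= TT g p c X0 X0 N).
  { unfold TT.
    apply Rle_trans with (c ^ K * p ^ S K * (g (p ^ S K * X0) * g (p ^ S K * X0))).
    - unfold tau. apply Rmult_le_compat_l.
      apply Rmult_le_pos; apply pow_le; lra.
      assert (0 < d / 2) by (unfold d; lra). replace ((d / 2) ^ 2) with ((d / 2) * (d / 2)) by ring. apply Rmult_le_compat; lra.
    - apply (sumN_ge_term (fun k => c ^ k * p ^ S k * (g (p ^ S k * X0) * g (p ^ S k * X0)))).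
      + intro k. apply Rmult_le_pos. apply Rmult_le_pos; apply pow_le; lra.
        apply Rle_0_sqr.
      + unfold N. lia. }
  assert (HTd : Rabs (TT g p c X0 Y N - TT g p c X0 X0 N) <= Kn * e).
  { unfold TT, Kn. rewrite <- sumN_scal_r. apply sumN_diff. intro k.
    replace (c ^ k * p ^ S k * (g (p ^ S k * X0) * g (p ^ S k * Y)) -
             c ^ k * p ^ S k * (g (p ^ S k * X0) * g (p ^ S k * X0)))
      with (c ^ k * p ^ S k * (g (p ^ S k * X0) * (g (p ^ S k * Y) - g (p ^ S k * X0)))) by ring.
    assert (Hck : 0 <= c ^ k * p ^ S k) by (apply Rmult_le_pos; apply pow_le; lra).
    rewrite Rabs_mult, (Rabs_pos_eq (c ^ k * p ^ S k)) by exact Hck.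
    apply Rle_trans with (c ^ k * p ^ S k * (M * (L * (p ^ S k * e)))).
    2: { right. ring. }
    apply Rmult_le_compat_l. exact Hck.
    rewrite Rabs_mult.
    assert (H1 := Hbnd (p ^ S k * X0) (Hin _ _ HXB)).
    assert (H2 := Hlip (p ^ S k * Y) (p ^ S k * X0) (Hin _ _ HYB) (Hin _ _ HXB)).
    replace (p ^ S k * Y - p ^ S k * X0) with (p ^ S k * (Y - X0)) in H2 by ring.
    rewrite Rabs_mult, (Rabs_pos_eq (p ^ S k)) in H2 by (apply pow_le; lra).
    fold e in H2.
    apply Rmult_le_compat; try apply Rabs_pos; assumption. }
  assert (HDN : Rabs (DD g p X0 Y N) <= 2 * M * L * p ^ N * e).
  { unfold DD.
    replace (g (p ^ N * X0) * g (p ^ S N * Y) - g (p ^ N * Y) * g (p ^ S N * X0)) with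
      (g (p ^ N * X0) * (g (p ^ S N * Y) - g (p ^ S N * X0))
       + - (g (p ^ S N * X0) * (g (p ^ N * Y) - g (p ^ N * X0)))) by ring.
    eapply Rle_trans. apply Rabs_triang. rewrite Rabs_Ropp, !Rabs_mult.
    assert (H1 := Hbnd (p ^ N * X0) (Hin _ _ HXB)).
    assert (H1' := Hbnd (p ^ S N * X0) (Hin _ _ HXB)).
    assert (H2 := Hlip (p ^ S N * Y) (p ^ S N * X0) (Hin _ _ HYB) (Hin _ _ HXB)).
    assert (H3 := Hlip (p ^ N * Y) (p ^ N * X0) (Hin _ _ HYB) (Hin _ _ HXB)).
    replace (p ^ S N * Y - p ^ S N * X0) with (p ^ S N * (Y - X0)) in H2 by ring.
    replace (p ^ N * Y - p ^ N * X0) with (p ^ N * (Y - X0)) in H3 by ring.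
    rewrite Rabs_mult, (Rabs_pos_eq (p ^ S N)) in H2 by (apply pow_le; lra).
    rewrite Rabs_mult, (Rabs_pos_eq (p ^ N)) in H3 by (apply pow_le; lra).
    fold e in H2, H3.
    assert (HpS : p ^ S N <= p ^ N) by (apply pow_decr; [lra| lia]).
    assert (0 <= p ^ S N) by (apply pow_le; lra).
    assert (A1 : Rabs (g (p ^ N * X0)) * Rabs (g (p ^ S N * Y) - g (p ^ S N * X0))
                 <= M * (L * (p ^ N * e))).
    { apply Rmult_le_compat; try apply Rabs_pos; try assumption.
      eapply Rle_trans. exact H2. apply Rmult_le_compat_l. lra.
      apply Rmult_le_compat_r; lra. }
    assert (A2 : Rabs (g (p ^ S N * X0)) * Rabs (g (p ^ N * Y) - g (p ^ N * X0))
                 <= M * (L * (p ^ N * e))).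
    { apply Rmult_le_compat; try apply Rabs_pos; assumption. }
    lra. }
  assert (HcN : 0 < c ^ N) by (apply pow_lt; lra).
  assert (Herr : Rabs (c ^ N * DD g p X0 Y N) <= tau / 4 * e).
  { rewrite Rabs_mult, Rabs_pos_eq by lra.
    apply Rle_trans with (c ^ N * (2 * M * L * p ^ N * e)).
    apply Rmult_le_compat_l; lra.
    replace (c ^ N * (2 * M * L * p ^ N * e)) with (2 * M * L * (c * p) ^ N * e)
      by (rewrite Rpow_mult_distr; ring).
    apply Rmult_le_compat_r; lra. }
  assert (HKe : Kn * e < tau / 4).
  { assert (e * (4 * (Kn + 1)) < tau).
    { apply (Rmult_lt_reg_r (/ (4 * (Kn + 1)))). apply Rinv_0_lt_compat; lra.
      rewrite Rmult_assoc, Rinv_r, Rmult_1_r by lra. exact HY2. }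
    nra. }
  assert (HTY : TT g p c X0 Y N >= tau / 2 + tau / 4).
  { pose proof (Rle_abs (TT g p c X0 Y N - TT g p c X0 X0 N)).
    pose proof (Rabs_minus_sym (TT g p c X0 Y N) (TT g p c X0 X0 N)).
    pose proof (Rle_abs (TT g p c X0 X0 N - TT g p c X0 Y N)). lra. }
  rewrite Htel.
  assert (Hsq : (Y - X0) * (Y - X0) = e * e).
  { unfold e. rewrite <- Rabs_mult. rewrite Rabs_pos_eq. ring. nra. }
  set (R0 := c ^ N * DD g p X0 Y N) in *.
  assert (Hyx : (Y - X0) * R0 >= - (e * (tau / 4 * e))).
  { assert (Habs : Rabs ((Y - X0) * R0) <= e * (tau / 4 * e)).
    { rewrite Rabs_mult. apply Rmult_le_compat_l; [lra| exact Herr]. }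
    pose proof (Rle_abs (- ((Y - X0) * R0))). rewrite Rabs_Ropp in H. lra. }
  replace ((Y - X0) * ((Y - X0) * TT g p c X0 Y N + R0)) with
    ((Y - X0) * (Y - X0) * TT g p c X0 Y N + (Y - X0) * R0) by ring.
  rewrite Hsq.
  assert (Hee : 0 < e * e) by nra.
  assert (e * e * TT g p c X0 Y N >= e * e * (tau / 2 + tau / 4)).
  { apply Rmult_ge_compat_l; lra. }
  assert (0 < e * e * (tau / 2)) by nra.
  lra.
Qed.


Lemma cont_ext (f g : R -> R) (x : R) : (forall y, f y = g y) ->
  continuity_pt f x -> continuity_pt g x.
Proof. intros H. apply continuity_pt_locally_ext with 1. lra. intros; apply H. Qed.

Lemma sq_cont (x : R) : continuity_pt (fun y => y ^ 2) x.
Proof.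
  apply cont_ext with (fun y => y * y). intro y; ring.
  apply (continuity_pt_mult (fun y => y) (fun y => y)); apply continuity_pt_id.
Qed.

Lemma ivt_open (f : R -> R) (a b : R) : (forall x, continuity_pt f x) -> a < b ->
  f a * f b < 0 -> exists x, a < x < b /\ f x = 0.
Proof.
  intros Hc Hab Hs.
  destruct (Rlt_or_le (f a) 0) as [Hfa|Hfa].
  - assert (Hfb : 0 < f b) by nra.
    destruct (IVT f a b Hc Hab Hfa Hfb) as [z [Hz Hfz]].
    exists z. split; [|exact Hfz].
    split; [destruct (proj1 Hz) as [H|H]; [exact H| subst; lra]
           | destruct (proj2 Hz) as [H|H]; [exact H| subst; lra]].
  - assert (Hfa' : 0 < f a) by (destruct Hfa; [lra| rewrite <- H in Hs; nra]).
    assert (Hfb : f b < 0) by nra.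
    assert (Hc' : continuity (fun x => - f x)).
    { intro x. apply (continuity_pt_opp f). apply Hc. }
    destruct (IVT (fun x => - f x) a b Hc' Hab ltac:(lra) ltac:(lra)) as [z [Hz Hfz]].
    exists z. split; [|lra].
    split; [destruct (proj1 Hz) as [H|H]; [exact H| subst; lra]
           | destruct (proj2 Hz) as [H|H]; [exact H| subst; lra]].
Qed.

Lemma nozero_sign (f : R -> R) (a b y1 y2 : R) : (forall x, continuity_pt f x) ->
  (forall y, a < y < b -> f y <> 0) -> a < y1 < b -> a < y2 < b -> 0 < f y1 * f y2.
Proof.
  intros Hc Hnz H1 H2.
  assert (F1 := Hnz y1 H1). assert (F2 := Hnz y2 H2).
  destruct (Rlt_or_le 0 (f y1 * f y2)) as [H|H]; [exact H|exfalso].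
  assert (Hneg : f y1 * f y2 < 0).
  { destruct H as [H|H]; [exact H|]. apply Rmult_integral in H. tauto. }
  destruct (Rtotal_order y1 y2) as [Hl|[He|Hg]].
  - destruct (ivt_open f y1 y2 Hc Hl Hneg) as [x [Hx Hfx]].
    apply (Hnz x); [lra|exact Hfx].
  - subst. nra.
  - rewrite Rmult_comm in Hneg.
    destruct (ivt_open f y2 y1 Hc Hg Hneg) as [x [Hx Hfx]].
    apply (Hnz x); [lra|exact Hfx].
Qed.

Theorem lemma3p6 (q nu a b : R) :
  0 < q < 1 -> -1 < nu ->
  0 < a -> a < b ->
  HEJ q nu a = 0 -> HEJ q nu b = 0 ->
  (forall x, a < x < b -> HEJ q nu x <> 0) ->
  (exists x, a < x < b /\ HEJ q (nu - 1) x = 0) /\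
  (exists x, a < x < b /\ HEJ q (nu + 1) x = 0).
Proof.
  intros Hq Hnu Ha Hab HA HB Hmid.
  destruct (coef_bound q nu Hq Hnu) as [m [Hm Hcb]].
  set (p := q ^ 2). set (c := Rpower q (2 * nu)).
  assert (Hp : 0 < p < 1) by (unfold p; simpl; nra).
  assert (Hc : 0 < c) by (unfold c, Rpower; apply exp_pos).
  assert (Hcp : c * p < 1).
  { unfold c, p. rewrite <- Rpower_add2 by lra. apply Rpower_in01; lra. }
  destruct (qpoch_bounds p p ltac:(lra) Hp) as [m' [Hm' [_ HQi]]].
  set (Qi := qpoch_inf p p) in *.
  set (g := G q nu).
  assert (Hg0 : 0 < g 0).
  { unfold g, G. rewrite Series_incr_1 by (apply (G_ex q nu m Hq Hm Hcb)).
    rewrite (Series_ext _ (fun k => 0 * (coef q nu (S k) * 0 ^ k))) by (intro k; simpl; ring).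
    rewrite Series_scal_l, Rmult_0_l, Rplus_0_r. simpl. rewrite Rmult_1_r.
    unfold coef. simpl. rewrite Rmult_0_r, Rplus_0_r, !Rmult_1_l, Rdiv_1_r.
    assert (HA0 : 0 < Rpower q (2 * nu + 2) < 1) by (apply Rpower_in01; lra).
    destruct (qpoch_bounds (Rpower q (2 * nu + 2)) p ltac:(lra) Hp) as [m0 [Hm0 [_ HI]]].
    apply Rlt_le_trans with m0; [lra | apply HI]. }
  assert (Hrel : forall x, 0 < x -> (HEJ q nu x = 0 <-> g (x ^ 2) = 0)).
  { intros x Hx. rewrite HEJ_G. fold p Qi g.
    assert (Hx1 : 0 < Rpower x nu) by (unfold Rpower; apply exp_pos).
    assert (Hx2 : 0 < Rpower x nu / Qi) by (apply Rdiv_lt_0_compat; lra).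
    split; intro H0. apply Rmult_integral in H0. destruct H0 as [H0|H0]; [lra|exact H0].
    rewrite H0. ring. }
  assert (ga : g (a ^ 2) = 0) by (apply Hrel; auto).
  assert (gb : g (b ^ 2) = 0) by (apply Hrel; auto; lra).
  assert (gmid : forall y, a < y < b -> g (y ^ 2) <> 0).
  { intros y Hy H. apply (Hmid y Hy). apply Hrel; [lra|exact H]. }
  set (B := b ^ 2 + 1).
  set (L := Rabs (/ m * dom q (2 * B + 2))).
  set (M := / m * dom q B).
  assert (Hlip : forall z w, 0 <= z <= B -> 0 <= w <= B -> Rabs (g z - g w) <= L * Rabs (z - w)).
  { intros z w Hz Hw.
    eapply Rle_trans. apply (G_lip q nu m Hq Hm Hcb z w B);
      rewrite Rabs_pos_eq; lra.
    apply Rmult_le_compat_r. apply Rabs_pos. apply Rle_abs. }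
  assert (Hbnd : forall z, 0 <= z <= B -> Rabs (g z) <= M).
  { intros z Hz. apply (G_bound q nu m Hq Hm Hcb). rewrite Rabs_pos_eq; lra. }
  assert (HL : 0 <= L) by apply Rabs_pos.
  assert (Hrec : forall z, g z = (1 + c - p * z) * g (p * z) - c * g (p * (p * z))).
  { intro z. apply (G_rec q nu m Hq Hm Hcb). }
  assert (Ha2 : 0 < a ^ 2) by (simpl; nra).
  assert (Hab2 : a ^ 2 < b ^ 2) by (simpl; nra).
  destruct (local_sign g p c L M B (a ^ 2) Hp Hc Hcp HL Hrec Hlip Hbnd Hg0 Ha2
              ltac:(unfold B; lra) ga) as [da [Hda Hsa]].
  destruct (local_sign g p c L M B (b ^ 2) Hp Hc Hcp HL Hrec Hlip Hbnd Hg0 ltac:(lra)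
              ltac:(unfold B; lra) gb) as [db [Hdb Hsb]].
  set (t1 := Rmin ((b - a) / 2) (da / (2 * b + 1))).
  assert (Ht1 : 0 < t1) by (apply Rmin_pos; apply Rdiv_lt_0_compat; lra).
  assert (Ht1a : t1 <= (b - a) / 2) by apply Rmin_l.
  assert (Ht1b : t1 <= da / (2 * b + 1)) by apply Rmin_r.
  set (y1 := a + t1).
  assert (Hy1 : a < y1 < b) by (unfold y1; lra).
  assert (S1 : g (y1 ^ 2) * g (p * a ^ 2) < 0).
  { assert (Hd : 0 < y1 ^ 2 - a ^ 2) by (simpl; nra).
    assert (Hd2 : y1 ^ 2 - a ^ 2 < da).
    { replace (y1 ^ 2 - a ^ 2) with (t1 * (2 * a + t1)) by (unfold y1; ring).
      assert (t1 * (2 * b + 1) <= da).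
      { apply (Rmult_le_reg_r (/ (2 * b + 1))). apply Rinv_0_lt_compat; lra.
        rewrite Rmult_assoc, Rinv_r, Rmult_1_r by lra. exact Ht1b. }
      nra. }
    assert (H := Hsa (y1 ^ 2) ltac:(simpl; nra) ltac:(rewrite Rabs_pos_eq; lra) ltac:(lra)).
    nra. }
  set (t2 := Rmin ((b - a) / 2) (db / (2 * b + 1))).
  assert (Ht2 : 0 < t2) by (apply Rmin_pos; apply Rdiv_lt_0_compat; lra).
  assert (Ht2a : t2 <= (b - a) / 2) by apply Rmin_l.
  assert (Ht2b : t2 <= db / (2 * b + 1)) by apply Rmin_r.
  set (y2 := b - t2).
  assert (Hy2 : a < y2 < b) by (unfold y2; lra).
  assert (S2 : 0 < g (y2 ^ 2) * g (p * b ^ 2)).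
  { assert (Hd : y2 ^ 2 - b ^ 2 < 0) by (unfold y2; simpl; nra).
    assert (Hd2 : b ^ 2 - y2 ^ 2 < db).
    { replace (b ^ 2 - y2 ^ 2) with (t2 * (2 * b - t2)) by (unfold y2; ring).
      assert (t2 * (2 * b + 1) <= db).
      { apply (Rmult_le_reg_r (/ (2 * b + 1))). apply Rinv_0_lt_compat; lra.
        rewrite Rmult_assoc, Rinv_r, Rmult_1_r by lra. exact Ht2b. }
      nra. }
    assert (H := Hsb (y2 ^ 2) ltac:(simpl; nra)
       ltac:(rewrite Rabs_minus_sym, Rabs_pos_eq; lra) ltac:(lra)).
    nra. }
  assert (Hgc : forall z, continuity_pt g z) by (intro z; apply (G_cont q nu m Hq Hm Hcb)).
  assert (HFc : forall x, continuity_pt (fun y => g (y ^ 2)) x).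
  { intro x. apply (continuity_pt_comp (fun y => y ^ 2) g). apply sq_cont. apply Hgc. }
  assert (S12 := nozero_sign (fun y => g (y ^ 2)) a b y1 y2 HFc gmid Hy1 Hy2).
  cbv beta in S12.
  assert (Hsign : g (p * a ^ 2) * g (p * b ^ 2) < 0).
  { set (u := g (y1 ^ 2)) in *. set (v := g (y2 ^ 2)) in *.
    set (A := g (p * a ^ 2)) in *. set (Bv := g (p * b ^ 2)) in *.
    assert (u * A * (v * Bv) < 0) by nra.
    assert (u * v * (A * Bv) < 0) by (replace (u * v * (A * Bv)) with (u * A * (v * Bv)) by ring; lra).
    destruct (Rlt_or_le (A * Bv) 0) as [Hl|Hl]; [exact Hl|].
    assert (0 <= u * v * (A * Bv)) by (apply Rmult_le_pos; lra). lra. }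
  assert (Hdiv : forall X, g X = 0 -> g (X / p) = - c * g (p * X)).
  { intros X HX. rewrite (Hrec (X / p)).
    replace (p * (X / p)) with X by (field; lra).
    rewrite HX. ring. }
  split.
  - set (phi := fun x => g (x ^ 2) - c * g (p * x ^ 2)).
    assert (Hphic : forall x, continuity_pt phi x).
    { intro x. apply (continuity_pt_minus (fun y => g (y ^ 2)) (fun y => c * g (p * y ^ 2))).
      apply HFc.
      apply (continuity_pt_scal (fun y => g (p * y ^ 2))).
      apply (continuity_pt_comp (fun y => p * y ^ 2) g).
      apply (continuity_pt_scal (fun y => y ^ 2)). apply sq_cont. apply Hgc. }
    destruct (ivt_open phi a b Hphic Hab) as [x [Hx Hphix]].
    { unfold phi. rewrite ga, gb.
      match goal with |- ?e < 0 => replace e with ((c * c) * (g (p * a ^ 2) * g (p * b ^ 2))) by ring end.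
      rewrite <- (Rmult_0_r (c * c)). apply Rmult_lt_compat_l; [nra | exact Hsign]. }
    exists x. split; [exact Hx|].
    rewrite (HEJ_m1 q nu m Hq Hm Hcb). fold p c. fold g.
    unfold phi in Hphix. rewrite Hphix. ring.
  - set (phi := fun x => g (x ^ 2) - g (x ^ 2 / p)).
    assert (Hphic : forall x, continuity_pt phi x).
    { intro x. apply (continuity_pt_minus (fun y => g (y ^ 2)) (fun y => g (y ^ 2 / p))).
      apply HFc.
      apply (continuity_pt_comp (fun y => y ^ 2 / p) g).
      apply cont_ext with (fun y => / p * y ^ 2). intro; unfold Rdiv; ring.
      apply (continuity_pt_scal (fun y => y ^ 2)). apply sq_cont. apply Hgc. }
    destruct (ivt_open phi a b Hphic Hab) as [x [Hx Hphix]].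
    { unfold phi. rewrite ga, gb, (Hdiv _ ga), (Hdiv _ gb).
      match goal with |- ?e < 0 => replace e with ((c * c) * (g (p * a ^ 2) * g (p * b ^ 2))) by ring end.
      rewrite <- (Rmult_0_r (c * c)). apply Rmult_lt_compat_l; [nra | exact Hsign]. }
    exists x. split; [exact Hx|].
    assert (Hx0 : x <> 0) by lra.
    assert (H := HEJ_p1 q nu m Hq Hm Hcb x Hx0). fold p g in H.
    unfold phi in Hphix. rewrite Hphix, Rmult_0_r in H.
    apply Rmult_integral in H. destruct H as [H|H]; [exact H|].
    exfalso. simpl in H. nra.
Qed.
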